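(* Let $\alpha,q\in(-1,1)$ and $x\in H$. Then $b_{\alpha,q}(x)=r_q(x)+\alpha\,\ell_q(\bar x)\,q^{N-1}$, i.e. for every $n\ge1$ and $f\in H^{\otimes n}$, $b_{\alpha,q}(x)f=r_q(x)f+\alpha q^{n-1}\ell_q(\bar x)f$ (with $0^0=1$), where $$r_q(x)(x_1\otimes\cdots\otimes x_n)=\sum_{k=1}^n q^{n-k}\langle x,x_k\rangle\,x_1\otimes\cdots\otimes\check x_k\otimes\cdots\otimes x_n,$$ $$\ell_q(x)(x_1\otimes\cdots\otimes x_n)=\sum_{k=1}^n q^{k-1}\langle x,x_k\rangle\,x_1\otimes\cdots\otimes\check x_k\otimes\cdots\otimes x_n,$$ $\check x_k$ denoting omission of the factor $x_k$ (for $n=1$ the result is a multiple of $\Omega$).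
   Context: Let $H_\mathbb{R}$ be a real separable Hilbert space and $H$ its complexification, with inner product $\langle\cdot,\cdot\rangle$ linear in the second and antilinear in the first argument. Fix a self-adjoint involution $x\mapsto\bar x$ on $H$ (linear, $\bar{\bar x}=x$, $\langle\bar x,y\rangle=\langle x,\bar y\rangle$). Let $\Sigma(n)$ be the group of bijections $\sigma$ of $\{\pm1,\dots,\pm n\}$ with $\sigma(-k)=-\sigma(k)$, generated by $\pi_0=(1,-1)$ and $\pi_i=(i,i+1)$, $1\le i\le n-1$; for $\sigma$ written as a reduced word, $l_1(\sigma)$ is the number of occurrences of $\pi_0$ and $l_2(\sigma)$ the number of occurrences of $\pi_i$, $i\ge1$. $\Sigma(n)$ acts on $H^{\otimes n}$ by $\pi_i$ swapping the $i$-th and $(i+1)$-th factors and $\pi_0(x_1\otimes\cdots\otimes x_n)=\overline{x_1}\otimes x_2\otimes\cdots\otimes x_n$. Set $P^{(n)}_{\alpha,q}=\sum_{\sigma\in\Sigma(n)}\alpha^{l_1(\sigma)}q^{l_2(\sigma)}\sigma$ ($n\ge1$, $0^0=1$), $P^{(0)}_{\alpha,q}=\mathrm{id}$. Let $\mathcal F=\bigoplus_{n\ge0}H^{\otimes n}$ be the algebraic full Fock space, $H^{\otimes0}=\mathbb{C}\Omega$, with $\langle x_1\otimes\cdots\otimes x_m,y_1\otimes\cdots\otimes y_n\rangle_{0,0}=\delta_{m,n}\prod_i\langle x_i,y_i\rangle$ and $\langle f,g\rangle_{\alpha,q}=\langle f,P_{\alpha,q}g\rangle_{0,0}$, $P_{\alpha,q}=\bigoplus_nP^{(n)}_{\alpha,q}$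 (an inner product for $\alpha,q\in(-1,1)$). $N$ is the number operator, $Nf=nf$ for $f\in H^{\otimes n}$. The right creation operator is $r^*(x)(x_1\otimes\cdots\otimes x_n)=x_1\otimes\cdots\otimes x_n\otimes x$, $r^*(x)\Omega=x$. The $(\alpha,q)$-creation operator is $b^*_{\alpha,q}(x):=r^*(x)$ and $b_{\alpha,q}(x)$ is its adjoint with respect to $\langle\cdot,\cdot\rangle_{\alpha,q}$. *)

(* Defs.v *)
From HB Require Import structures.
From mathcomp Require Import all_boot all_order all_algebra all_fingroup.
From mathcomp Require Import complex.
From Stdlib Require Import ClassicalEpsilon.
Set Implicit Arguments. Unset Strict Implicit. Unset Printing Implicit Defensive.
Import Order.TTheory GRing.Theory Num.Theory.
Local Open Scope ring_scope.

(* The points +-1,...,+-n are encoded as pairs (k, b) : 'I_n * bool, where  *)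
(* k = j-1 is the (0-based) index of the point +-j and b = true means "-".   *)

Definition sflip (T : Type) (z : T * bool) : T * bool := (z.1, ~~ z.2).

Definition signedb (n : nat) (s : {perm 'I_n * bool}) : bool :=
  [forall z : 'I_n * bool, s (sflip z) == sflip (s z)].

Definition Sigma (n : nat) : seq {perm 'I_n * bool} :=
  [seq s <- enum {: {perm 'I_n * bool}} | signedb s].

(*   generator 0     = pi_0 = (1,-1)        : flips the sign of point index 0 *)
(*   generator i>=1  = pi_i = (i,i+1)       : swaps point indices i-1 and i   *)
Definition swapn (i j k : nat) : nat :=
  if k == i then j else if k == j then i else k.

Definition gen_pt (g : nat) (z : nat * bool) : nat * bool :=
  if g == 0%N then (if z.1 == 0%N then (z.1, ~~ z.2) else z)
  else (swapn g.-1 g z.1, z.2).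

(* A word [:: g1; ...; gk] denotes the product g1 g2 ... gk (composition). *)
Definition word_pt (w : seq nat) : nat * bool -> nat * bool :=
  foldr (fun g f => gen_pt g \o f) id w.

Definition valid_word (n : nat) (w : seq nat) : bool := all (fun g => g < n)%N w.

Definition represents (n : nat) (w : seq nat) (s : {perm 'I_n * bool}) : Prop :=
  valid_word n w /\
  forall z : 'I_n * bool, ((nat_of_ord (s z).1, (s z).2) = word_pt w (nat_of_ord z.1, z.2)).

Definition reduced_word (n : nat) (s : {perm 'I_n * bool}) (w : seq nat) : Prop :=
  represents w s /\ forall w', represents w' s -> (size w <= size w')%N.

Definition redword (n : nat) (s : {perm 'I_n * bool}) : seq nat :=
  epsilon (inhabits [::]) (reduced_word s).

Definition l1 (n : nat) (s : {perm 'I_n * bool}) : nat := count (pred1 0%N) (redword s).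
Definition l2 (n : nat) (s : {perm 'I_n * bool}) : nat :=
  count (fun g => g != 0%N) (redword s).

(* Action of Sigma(n) on simple tensors x_1 (x) ... (x) x_n, encoded as the *)
(* word [:: x_1; ...; x_n] : seq H.                                          *)
Section Action.
Variables (C : pzRingType) (H : lmodType C) (bar : H -> H).

Definition gen_act (g : nat) (w : seq H) : seq H :=
  if g == 0%N then [seq (if i == 0%N then bar else id) (nth 0 w i) | i <- iota 0 (size w)]
  else [seq nth 0 w (swapn g.-1 g i) | i <- iota 0 (size w)].

Definition word_act (w : seq nat) : seq H -> seq H :=
  foldr (fun g f => gen_act g \o f) id w.

Definition sigma_act (n : nat) (s : {perm 'I_n * bool}) (w : seq H) : seq H :=
  word_act (redword s) w.
End Action.

(* The algebraic full Fock space, as formal finite linear combinations of   *)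
(* simple tensors: an element is a list of (coefficient, word) pairs, the   *)
(* pair (c, [:: x_1; ...; x_n]) standing for c x_1 (x) ... (x) x_n and the  *)
(* empty word for Omega. All operators are defined on simple tensors and    *)
(* extended linearly; the inner products are extended sesquilinearly.       *)
Section Fock.
Local Open Scope complex_scope.
Variables (R : rcfType) (H : lmodType R[i]) (ip : H -> H -> R[i]) (bar : H -> H).
Variables (alpha q : R).

Definition Fock := seq (R[i] * seq H).

Definition ip_word (u v : seq H) : R[i] :=
  if size u == size v then \prod_(p <- zip u v) ip p.1 p.2 else 0.

Definition ip00 (f g : Fock) : R[i] :=
  \sum_(a <- f) \sum_(b <- g) conjc a.1 * b.1 * ip_word a.2 b.2.

Definition P_word (w : seq H) : Fock :=
  [seq (((alpha ^+ l1 s) * (q ^+ l2 s))%:C, sigma_act bar s w) | s <- Sigma (size w)].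

Definition P_aq (f : Fock) : Fock :=
  flatten [seq [seq (a.1 * c.1, c.2) | c <- P_word a.2] | a <- f].

Definition ip_aq (f g : Fock) : R[i] := ip00 f (P_aq g).

Definition rstar (x : H) (f : Fock) : Fock := [seq (a.1, rcons a.2 x) | a <- f].

Definition del_at (j : nat) (w : seq H) : seq H := take j w ++ drop j.+1 w.

(* r_q(x): with 0-based index j = k-1, coefficient q^{n-k} = q^{n-1-j} *)
Definition r_q (x : H) (f : Fock) : Fock :=
  flatten [seq [seq (a.1 * (q ^+ (size a.2 - 1 - j))%:C * ip x (nth 0 a.2 j), del_at j a.2)
               | j <- iota 0 (size a.2)] | a <- f].

(* l_q(x): coefficient q^{k-1} = q^j *)
Definition l_q (x : H) (f : Fock) : Fock :=
  flatten [seq [seq (a.1 * (q ^+ j)%:C * ip x (nth 0 a.2 j), del_at j a.2)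
               | j <- iota 0 (size a.2)] | a <- f].

(* q^{N-1} (on H^{(x)0} it is multiplied by l_q(.)Omega = 0 anyway) *)
Definition qNm1 (f : Fock) : Fock := [seq ((q ^+ (size a.2).-1)%:C * a.1, a.2) | a <- f].

Definition b_formula (x : H) (f : Fock) : Fock :=
  r_q x f ++ [seq (alpha%:C * c.1, c.2) | c <- l_q (bar x) (qNm1 f)].

Definition is_aq_adjoint (A B : Fock -> Fock) : Prop :=
  forall f g : Fock, ip_aq (A g) f = ip_aq g (B f).
End Fock.

(* Main.v *)
Require Import Defs.
From HB Require Import structures.
From mathcomp Require Import all_boot all_order all_algebra all_fingroup.
From mathcomp Require Import complex.
From mathcomp Require Import zify ring.
From Stdlib Require Import ClassicalEpsilon.
Import Order.TTheory GRing.Theory Num.Theory.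
Set Implicit Arguments. Unset Strict Implicit. Unset Printing Implicit Defensive.

Definition sv (p : nat * bool) : int := if p.2 then (- (Posz p.1.+1))%R else (Posz p.1.+1).
Definition pairB (e p : nat * bool) : nat := ((sv p < sv e)%R + (sv e + sv p < 0)%R)%N.

Fixpoint Bst (r : seq (nat * bool)) : nat :=
  if r is e :: r' then (\sum_(p <- r') pairB e p + Bst r')%N else 0%N.
Definition negs (r : seq (nat * bool)) : nat := count snd r.

Lemma Bst_cat s1 s2 : Bst (s1 ++ s2) =
  (Bst s1 + Bst s2 + \sum_(e <- s1) \sum_(p <- s2) pairB e p)%N.
Proof.
elim: s1 => [|e s1 IH] /=; first by rewrite big_nil !addn0.
rewrite IH big_cons big_cat /=; lia.
Qed.

Lemma sv_sflip p : sv (sflip p) = (- sv p)%R.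
Proof. by case: p => k [] //=; rewrite /sv /= opprK. Qed.

Lemma pairB_sflip e p : pairB (sflip e) p = pairB e p.
Proof.
rewrite /pairB sv_sflip.
have -> : (sv p < - sv e)%R = (sv e + sv p < 0)%R by apply/idP/idP; lia.
have -> : (- sv e + sv p < 0)%R = (sv p < sv e)%R by apply/idP/idP; lia.
by rewrite addnC.
Qed.

Lemma pairB_swap x y : (pairB y x <= pairB x y + 1)%N.
Proof.
rewrite /pairB addrC; move: (sv x) (sv y) => a b.
by case: (a + b < 0)%R; case: (ltgtP a b).
Qed.

Lemma pairB_swap_lt x y : (sv y < sv x)%R -> pairB x y = (pairB y x + 1)%N.
Proof.
rewrite /pairB [(sv y + _)%R]addrC; move: (sv x) (sv y) => a b ba.
by rewrite ba (lt_gtF ba); case: (a + b < 0)%R.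
Qed.

Definition flip0 (r : seq (nat * bool)) := if r is e :: r' then sflip e :: r' else [::].
Definition swap_at (i : nat) (r : seq (nat * bool)) :=
  take i r ++ nth (0%N, false) r i.+1 :: nth (0%N, false) r i :: drop i.+2 r.

Lemma Bst_flip0 r : Bst (flip0 r) = Bst r.
Proof. by case: r => //= e r; congr (_ + _)%N; apply: eq_bigr => p _; rewrite pairB_sflip. Qed.

Lemma swap_at_eq i r : i.+1 < size r ->
  r = take i r ++ nth (0%N, false) r i :: nth (0%N, false) r i.+1 :: drop i.+2 r.
Proof.
move=> hi; rewrite -{1}(cat_take_drop i r); congr (_ ++ _).
by rewrite (drop_nth (0%N,false)) ?(drop_nth (0%N,false) hi) // ltnW.
Qed.

Lemma perm_swap_at i r : i.+1 < size r -> perm_eq (swap_at i r) r.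
Proof.
move=> hi; rewrite [X in perm_eq _ X](swap_at_eq hi) /swap_at perm_cat2l.
by rewrite -[_ :: _ :: drop _ _]/([:: _; _] ++ _) -[X in perm_eq _ X]/([:: _; _] ++ _) perm_cat2r
  -[[:: _; _]]/([:: _] ++ [:: _]) perm_catC.
Qed.

Lemma size_swap_at i r : i.+1 < size r -> size (swap_at i r) = size r.
Proof. by move=> hi; rewrite (perm_size (perm_swap_at hi)). Qed.

Lemma negs_swap_at i r : i.+1 < size r -> negs (swap_at i r) = negs r.
Proof. by move=> hi; rewrite /negs (seq.permP (perm_swap_at hi)). Qed.

Lemma Bst_swap_gen a x y c :
  (Bst (a ++ x :: y :: c) + pairB y x = Bst (a ++ y :: x :: c) + pairB x y)%N.
Proof.
rewrite !Bst_cat /=.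
have -> : \sum_(e <- a) \sum_(p <- [:: x, y & c]) pairB e p =
          \sum_(e <- a) \sum_(p <- [:: y, x & c]) pairB e p.
  by apply: eq_bigr => e _; rewrite !big_cons; lia.
rewrite !big_cons; lia.
Qed.

Lemma Bst_swap_le i r : i.+1 < size r -> (Bst (swap_at i r) <= Bst r + 1)%N.
Proof.
move=> hi; rewrite [X in (_ <= Bst X + 1)%N](swap_at_eq hi) /swap_at.
have := Bst_swap_gen (take i r) (nth (0%N,false) r i) (nth (0%N,false) r i.+1) (drop i.+2 r).
have := pairB_swap (nth (0%N,false) r i) (nth (0%N,false) r i.+1).
lia.
Qed.

Lemma Bst_swap_lt i r : i.+1 < size r ->
  (sv (nth (0%N,false) r i.+1) < sv (nth (0%N,false) r i))%R ->
  Bst r = (Bst (swap_at i r) + 1)%N.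
Proof.
move=> hi lt; rewrite {1}(swap_at_eq hi) /swap_at.
have := Bst_swap_gen (take i r) (nth (0%N,false) r i) (nth (0%N,false) r i.+1) (drop i.+2 r).
rewrite (pairB_swap_lt lt); lia.
Qed.

Lemma swapnK i j k : i != j -> swapn i j (swapn i j k) = k.
Proof.
rewrite /swapn => ij.
case: (eqVneq k i) => [->|ki]; first by rewrite eq_sym (negbTE ij) eqxx.
case: (eqVneq k j) => [->|kj]; first by rewrite eqxx.
by rewrite (negbTE ki) (negbTE kj).
Qed.

Lemma nth_swap_at d i r j : i.+1 < size r ->
  nth d (swap_at i r) j = nth d r (swapn i i.+1 j).
Proof.
move=> hi; rewrite /swap_at nth_cat size_take (ltnW hi) /swapn.
case: (ltngtP j i) => [ji|ij|->].
- rewrite nth_take // (ltn_eqF (ltn_trans ji (ltnSn _))).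
  by [].
- have [m ->] : exists m, j = (i + m.+1)%N by exists (j - i).-1; lia.
  rewrite (_ : (i + m.+1 - i) = m.+1)%N; last by lia.
  case: m => [|k] /=.
  + by rewrite addn1 eqxx; apply: set_nth_default; rewrite ltnW.
  + rewrite (_ : (i + k.+2 == i.+1) = false); last by apply/eqP; lia.
    by rewrite nth_drop; congr nth; lia.
- by rewrite subnn /=; apply: set_nth_default.
Qed.

Lemma swap_atK i r : i.+1 < size r -> swap_at i (swap_at i r) = r.
Proof.
move=> hi; have hi' : i.+1 < size (swap_at i r) by rewrite size_swap_at.
apply: (@eq_from_nth _ (0%N,false)); first by rewrite !size_swap_at.
move=> j _; rewrite nth_swap_at // nth_swap_at // swapnK //.
by rewrite neq_ltn ltnSn.
Qed.

Lemma gen_ptK g z : gen_pt g (gen_pt g z) = z.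
Proof.
case: z => k b; rewrite /gen_pt; case: (eqVneq g 0%N) => [_|gn0] /=.
  by case: (eqVneq k 0%N) => [->|kn] /=; rewrite ?negbK ?(negbTE kn).
by rewrite swapnK //; case: g gn0 => // g _; rewrite /= neq_ltn ltnSn.
Qed.

Lemma gen_pt_sflip g z : gen_pt g (sflip z) = sflip (gen_pt g z).
Proof. by case: z => k b; rewrite /gen_pt /sflip; case: (g == 0%N); case: (k == 0%N). Qed.

Lemma word_pt_cons g w z : word_pt (g :: w) z = gen_pt g (word_pt w z).
Proof. by []. Qed.

Lemma word_pt_rcons w g z : word_pt (rcons w g) z = word_pt w (gen_pt g z).
Proof. by elim: w => //= g' w IH; rewrite /comp IH. Qed.

Lemma word_pt_revK w z : word_pt (rev w) (word_pt w z) = z.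
Proof. by elim: w z => //= g w IH z; rewrite rev_cons word_pt_rcons /comp gen_ptK IH. Qed.

Lemma word_pt_Krev w z : word_pt w (word_pt (rev w) z) = z.
Proof. by rewrite -{1}(revK w) word_pt_revK. Qed.

Lemma word_pt_sflip w z : word_pt w (sflip z) = sflip (word_pt w z).
Proof. by elim: w => //= g w IH; rewrite /comp IH gen_pt_sflip. Qed.

Lemma gen_pt_lt n g z : g < n -> z.1 < n -> (gen_pt g z).1 < n.
Proof.
case: z => k b gn /= kn; rewrite /gen_pt; case: (g == 0%N); first by case: (k == 0%N).
by rewrite /= /swapn; case: (k == g.-1); case: (k == g) => //; apply: leq_ltn_trans gn; apply: leq_pred.
Qed.

Definition rw (w : seq nat) (n : nat) : seq (nat * bool) :=
  [seq word_pt (rev w) (i, false) | i <- iota 0 n].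

Lemma size_rw w n : size (rw w n) = n.
Proof. by rewrite size_map size_iota. Qed.

Lemma rw_nil n : rw [::] n = [seq (i, false) | i <- iota 0 n].
Proof. by []. Qed.

Lemma rw_cons0 w n : 0 < n -> rw (0%N :: w) n = flip0 (rw w n).
Proof.
case: n => // n _; rewrite /rw /= rev_cons word_pt_rcons /=.
congr (_ :: _); first by rewrite -word_pt_sflip.
apply/eq_in_map => i; rewrite mem_iota => /andP[hi _].
by rewrite word_pt_rcons /gen_pt /=; case: i hi.
Qed.

Lemma rw_consS w n i : i.+1 < n -> rw (i.+1 :: w) n = swap_at i (rw w n).
Proof.
move=> hi; apply: (@eq_from_nth _ (0%N,false)); first by rewrite size_swap_at ?size_rw.
rewrite size_rw => j jn.
have sn : swapn i i.+1 j < n by have := @gen_pt_lt n i.+1 (j, false) hi jn.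
rewrite nth_swap_at ?size_rw // /rw !(nth_map 0%N) ?size_iota //.
by rewrite rev_cons word_pt_rcons !nth_iota.
Qed.

Lemma Bst_id a n : Bst [seq (i, false) | i <- iota a n] = 0%N.
Proof.
elim: n a => //= n IH a; rewrite IH addn0 big_map big1_seq //.
move=> i /andP[_]; rewrite mem_iota => /andP[ai _].
rewrite /pairB /sv /=.
have -> : (Posz i.+1 < Posz a.+1)%R = false by apply/negbTE; rewrite ltz_nat -leqNgt; lia.
done.
Qed.

Lemma negs_id a n : negs [seq (i, false) | i <- iota a n] = 0%N.
Proof. by elim: n a => //= n IH a; rewrite /negs /= in IH *; rewrite IH. Qed.

Lemma rw_lower n w : all (fun g => g < n) w ->
  (negs (rw w n) <= count (pred1 0%N) w)%N /\ (Bst (rw w n) <= count (fun g => g != 0%N) w)%N.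
Proof.
elim: w => [|g w IH] /=; first by rewrite rw_nil negs_id Bst_id.
case/andP=> gn /IH [h1 h2]; case: g gn => [|i] gn /=.
  rewrite rw_cons0 // Bst_flip0; split => //.
  move: h1; case: (rw w n) => //= e r; rewrite /negs /=; case: e.2 => /=; lia.
rewrite rw_consS // negs_swap_at ?size_rw //; split => //.
have := Bst_swap_le (r := rw w n) (i := i); rewrite size_rw => /(_ gn) h.
by rewrite addnC; apply: (leq_trans h); rewrite leq_add2r.
Qed.

Definition sps n (r : seq (nat * bool)) := perm_eq (map fst r) (iota 0 n).

Lemma sps_size n r : sps n r -> size r = n.
Proof. by move/perm_size; rewrite size_map size_iota. Qed.

Lemma sps_sorted_id n r : sps n r -> (forall e r', r = e :: r' -> ~~ e.2) ->
  (forall i, i.+1 < size r -> (sv (nth (0%N,false) r i) <= sv (nth (0%N,false) r i.+1))%R) ->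
  r = [seq (i, false) | i <- iota 0 n].
Proof.
move=> hs hh hsort; have so : sorted (fun a b => sv a <= sv b)%R r by apply/(sortedP (0%N,false)).
have allpos : all (fun p => ~~ p.2) r.
  case: r hh so {hs hsort} => //= e r' /(_ e r' erefl) ep pa.
  rewrite ep /=; have := order_path_min (fun b a c (h1 : (sv a <= sv b)%R) h2 => le_trans h1 h2) pa.
  apply: sub_all => p /= le; apply: contraTN le; rewrite -ltNge /sv /=.
  move: ep; case: e.2 => //= _; case: p.2 => //= _; lia.
have -> : r = [seq (i, false) | i <- map fst r].
  rewrite -map_comp -[LHS]map_id; apply/eq_in_map => p pr /=.
  by move/allP/(_ p pr): allpos; case: p {pr} => ? [].
congr map; apply: (sorted_eq leq_trans anti_leq) => //; last exact: iota_sorted.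
rewrite sorted_map; apply: (sub_in_sorted _ allpos so) => p q /= pp qp.
by case: p q pp qp => [a []] [b []] //= _ _; rewrite /sv /=; lia.
Qed.

Lemma rw_exists n N r : (negs r + Bst r < N)%N -> sps n r ->
  exists w, [/\ all (fun g => g < n) w, rw w n = r,
    count (pred1 0%N) w = negs r & count (fun g => g != 0%N) w = Bst r].
Proof.
elim: N r => // N IH r hN hr; have sr := sps_size hr.
case A: (if r is e :: _ then e.2 else false).
  case: r A hN hr sr => // e r' e2 hN hr sr; simpl in e2.
  have hr1 : sps n (sflip e :: r') by [].
  have hB : Bst (sflip e :: r') = Bst (e :: r') := Bst_flip0 (e :: r').
  have hNe : negs (e :: r') = (negs (sflip e :: r')).+1 by rewrite /negs /= e2.
  have [|w1 [h1 h2 h3 h4]] := IH (sflip e :: r') _ hr1.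
    by rewrite hB; move: hN; rewrite hNe; lia.
  exists (0%N :: w1); split.
  - by rewrite /= h1 -sr.
  - rewrite rw_cons0; last by rewrite -sr.
    rewrite h2 /= /sflip /= negbK; congr (_ :: _); by case: e e2 {hN hr hr1 h2 h3 h4 hB hNe sr} => ? [].
  - by rewrite hNe -h3.

  - by rewrite -hB -h4.
case B: (has (fun i => sv (nth (0%N,false) r i.+1) < sv (nth (0%N,false) r i))%R (iota 0 (size r).-1)).
  case/hasP: B => i; rewrite mem_iota add0n => /andP[_ hi] lt.
  have hi1 : i.+1 < size r by case: (size r) hi.
  have hr1 : sps n (swap_at i r) by apply: perm_trans hr; apply: perm_map; exact: perm_swap_at.
  have eB := Bst_swap_lt hi1 lt; have eN := negs_swap_at hi1.
  have [|w1 [h1 h2 h3 h4]] := IH (swap_at i r) _ hr1; first lia.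
  exists (i.+1 :: w1); split => /=.
  - by rewrite h1 -sr hi1.
  - by rewrite rw_consS ?h2 ?swap_atK // -sr.
  - by rewrite h3 eN.
  - by rewrite h4 eB addnC.
have -> := sps_sorted_id hr _ _.
- by exists [::]; split => //; rewrite ?negs_id ?Bst_id.
- by move=> e r' er; move: A; rewrite er => ->.
- move=> i hi; rewrite leNgt; apply: contraFN B => lt; apply/hasP; exists i => //.
  by rewrite mem_iota /=; case: (size r) hi.
Qed.

Definition natpair n (z : 'I_n * bool) : nat * bool := (nat_of_ord z.1, z.2).
Definition rho n (s : {perm 'I_n * bool}) : seq (nat * bool) :=
  [seq natpair ((s^-1)%g (i, false)) | i <- enum 'I_n].

Lemma signedP n (s : {perm 'I_n * bool}) : signedb s -> forall z, s (sflip z) = sflip (s z).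
Proof. by move=> /forallP h z; apply/eqP. Qed.

Lemma signed_inv n (s : {perm 'I_n * bool}) : signedb s -> signedb (s^-1)%g.
Proof.
move=> hs; apply/forallP => z; apply/eqP; apply: (@perm_inj _ s).
by rewrite signedP // !permKV.
Qed.

Lemma natpair_sflip n (z : 'I_n * bool) : natpair (sflip z) = sflip (natpair z).
Proof. by []. Qed.

Lemma rw_rep n w (s : {perm 'I_n * bool}) : represents w s -> rw w n = rho s.
Proof.
case=> _ rep; rewrite /rw /rho -val_enum_ord -map_comp; apply/eq_map => i /=.
have := rep ((s^-1)%g (i, false)); rewrite permKV /= => ->.
by rewrite word_pt_revK.
Qed.

Lemma perm_iota_of n (t : seq nat) : uniq t -> all (fun k => k < n) t -> size t = n ->
  perm_eq t (iota 0 n).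
Proof.
move=> ut alt st; apply: uniq_perm => //; first exact: iota_uniq.
have sub : {subset t <= iota 0 n} by move=> k /(allP alt); rewrite mem_iota.
have hsz : (size (iota 0 n) <= size t)%N by rewrite size_iota st.
have [_ e] := uniq_min_size ut sub hsz. exact: e.
Qed.

Lemma sps_rho n (s : {perm 'I_n * bool}) : signedb s -> sps n (rho s).
Proof.
move=> hs; apply: perm_iota_of; last by rewrite !size_map -enumT size_enum_ord.
- rewrite -map_comp map_inj_uniq ?enum_uniq // => i j /= /val_inj eq1.
  set zi := (s^-1)%g (i, false) in eq1; set zj := (s^-1)%g (j, false) in eq1.
  case: (eqVneq zi.2 zj.2) => [e2|n2].
    have : zi = zj by case: zi zj eq1 e2 => ? ? [? ?] /= -> ->.
    by move/(congr1 s); rewrite !permKV => -[].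
  have : zj = sflip zi by case: zi zj eq1 n2 => ? [] [? []] //= ->.
  by move/(congr1 s); rewrite signedP // !permKV.
- by apply/allP => k /mapP [p /mapP [i _ ->] ->] /=.
Qed.

Lemma rep_exists n (s : {perm 'I_n * bool}) : signedb s ->
  exists w, [/\ represents w s, count (pred1 0%N) w = negs (rho s)
                & count (fun g => g != 0%N) w = Bst (rho s)].
Proof.
move=> hs; have [w [h1 h2 h3 h4]] := @rw_exists n (negs (rho s) + Bst (rho s)).+1 _ (ltnSn _) (sps_rho hs).
exists w; split => //; split => // z.
suff key : forall y, natpair y = word_pt w (natpair ((s^-1)%g y)).
  by rewrite -[in RHS](permK s z) -key.
move=> [i b].
have e0 : word_pt (rev w) (nat_of_ord i, false) = natpair ((s^-1)%g (i, false)).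
  have := congr1 (fun l => nth (0%N, false) l (nat_of_ord i)) h2.
  rewrite /rw /rho (nth_map 0%N) ?size_iota // nth_iota // (nth_map i) ?size_enum_ord //.
  by rewrite nth_ord_enum.
have e1 : natpair ((s^-1)%g (i, b)) = word_pt (rev w) (nat_of_ord i, b).
  case: b; last by rewrite e0.
  by rewrite -[(i, true)]/(sflip (i, false)) signedP ?signed_inv // natpair_sflip -e0
     -word_pt_sflip.
by rewrite e1 word_pt_Krev.
Qed.

Lemma rep_lower n w (s : {perm 'I_n * bool}) : represents w s ->
  (negs (rho s) <= count (pred1 0%N) w)%N /\ (Bst (rho s) <= count (fun g => g != 0%N) w)%N.
Proof. by move=> rep; rewrite -(rw_rep rep); apply: rw_lower; case: rep. Qed.

Lemma min_word (P : seq nat -> Prop) : (exists w, P w) ->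
  exists w, P w /\ forall w', P w' -> (size w <= size w')%N.
Proof.
case=> w0 p0; suff: forall k w, (size w <= k)%N -> P w ->
  exists w, P w /\ forall w', P w' -> (size w <= size w')%N by apply; last exact p0.
elim=> [|k IH] w sw pw.
  by exists w; split => // w' _; rewrite (leq_trans sw).
case: (classic (exists w', P w' /\ (size w' < size w)%N)) => [[w' [pw' lt]]|nex].
  by apply: (IH w') => //; rewrite -ltnS (leq_trans lt).
exists w; split => // w' pw'; rewrite leqNgt; apply/negP => lt; apply: nex; by exists w'.
Qed.

Lemma l12 n (s : {perm 'I_n * bool}) : signedb s ->
  [/\ l1 s = negs (rho s), l2 s = Bst (rho s) & represents (redword s) s].
Proof.
move=> hs; have [wE [repE c1 c2]] := rep_exists hs.
have ex : exists w, reduced_word s w by apply: min_word; exists wE.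
have [rep mn] : reduced_word s (redword s) by apply: epsilon_spec.
have [lo1 lo2] := rep_lower rep.
have := mn wE repE.
have := count_predC (pred1 0%N) (redword s).
have := count_predC (pred1 0%N) wE.
rewrite /l1 /l2 c1 -c2.
have -> : forall u, count (predC (pred1 0%N)) u = count (fun g => g != 0%N) u by [].
move: lo1 lo2; set a := count _ (redword s); set b := count _ (redword s).
move=> lo1 lo2 h1 h2 h3; rewrite c2 in h1 *; clearbody a b; move: (size (redword s)) h2 h3 => S h2 h3; move: (size wE) h1 h3 => S2 h1 h3; split => //; lia.
Qed.

Section ActSec.
Variables (C : pzRingType) (H : lmodType C) (bar : H -> H).
Hypothesis bar_invol : forall y, bar (bar y) = y.

Definition sgn (p : nat * bool) (t : seq H) : H := (if p.2 then bar else id) (nth 0%R t p.1).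
Definition sact (r : seq (nat * bool)) (t : seq H) : seq H := [seq sgn p t | p <- r].

Lemma sgn_sflip p t : sgn (sflip p) t = bar (sgn p t).
Proof. by case: p => k [] /=; rewrite /sgn /= ?bar_invol. Qed.

Lemma size_gen_act g u : size (gen_act bar g u) = size u.
Proof. by rewrite /gen_act; case: (g == 0%N); rewrite size_map size_iota. Qed.

Lemma size_word_act w u : size (word_act bar w u) = size u.
Proof. by elim: w => //= g w IH; rewrite /comp size_gen_act IH. Qed.

Lemma nth_gen_act g u i : i < size u ->
  nth 0%R (gen_act bar g u) i = sgn (gen_pt g (i, false)) u.
Proof.
move=> iu; rewrite /gen_act /gen_pt /sgn; case: (g == 0%N);
  rewrite (nth_map 0%N) ?size_iota // nth_iota //=.
by case: (i == 0%N).
Qed.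

Lemma nth_word_act w t i : all (fun g => g < size t) w -> i < size t ->
  nth 0%R (word_act bar w t) i = sgn (word_pt (rev w) (i, false)) t.
Proof.
elim: w i => //= g w IH i /andP[gt wt] it.
rewrite /comp nth_gen_act ?size_word_act // rev_cons word_pt_rcons.
case E: (gen_pt g (i, false)) => [j c].
have jt : j < size t by have := @gen_pt_lt (size t) g (i, false) gt it; rewrite E.
rewrite {1}/sgn /= IH //; case: c E => _ //=.
by rewrite -[(j, true)]/(sflip (j, false)) word_pt_sflip sgn_sflip.
Qed.

Lemma sigma_act_rho n (s : {perm 'I_n * bool}) t : signedb s -> size t = n ->
  sigma_act bar s t = sact (rho s) t.
Proof.
move=> hs st; have [_ _ rep] := l12 hs; rewrite /sigma_act.
apply: (@eq_from_nth _ 0%R); first by rewrite size_word_act size_map /rho size_map size_enum_ord.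
rewrite size_word_act => i it.
have vw : all (fun g => g < size t) (redword s) by rewrite st; case: rep.
rewrite nth_word_act // /sact (nth_map (0%N, false)); last by rewrite -(rw_rep rep) size_rw -st.
by rewrite -(rw_rep rep) /rw (nth_map 0%N) ?nth_iota -?st ?size_iota.
Qed.
End ActSec.

Definition allpts n : seq (nat * bool) := [seq (k, b) | k <- iota 0 n, b <- [:: false; true]].
Definition ext (p : nat * bool) (r : seq (nat * bool)) : seq (nat * bool) :=
  rcons [seq (bump p.1 e.1, e.2) | e <- r] p.
Fixpoint SPS n : seq (seq (nat * bool)) :=
  if n is m.+1 then [seq ext p r | p <- allpts m.+1, r <- SPS m] else [:: [::]].

Lemma sps_ext m k b r : (k < m.+1)%N -> sps m r -> sps m.+1 (ext (k, b) r).
Proof.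
move=> km hr; have ur : uniq (map fst r) by rewrite (perm_uniq hr) iota_uniq.
have sr := sps_size hr.
apply: perm_iota_of.
- rewrite /ext map_rcons -map_comp rcons_uniq /=; apply/andP; split.
    by apply/mapP => -[e _ /= /eqP]; rewrite (negbTE (neq_bump _ _)).
  rewrite (map_comp (bump k) fst) map_inj_uniq //; exact: (can_inj (bumpK k)).
- rewrite /ext map_rcons all_rcons km /= -map_comp; apply/allP => j /mapP [e er ->] /=.
  have : e.1 \in iota 0 m by rewrite -(perm_mem hr); apply: map_f.
  by rewrite mem_iota /bump /=; lia.
- by rewrite /ext size_map size_rcons size_map sr.
Qed.

Lemma SPS_sps n r : r \in SPS n -> sps n r.
Proof.
elim: n r => [|m IH] r; first by rewrite /= inE => /eqP ->.
case/allpairsP => -[[k b] r'] [/= pin r'in ->].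
apply: sps_ext; last exact: IH.
move: pin => /allpairsP [[k' b'] [/= + _ [-> _]]]. by rewrite -[0%N :: iota 1 m]/(iota 0 m.+1) mem_iota.
Qed.

Lemma unbump_lt (k m x : nat) : k < m.+1 -> x < m.+1 -> x != k -> unbump k x < m.
Proof. rewrite /unbump => h1 h2 /eqP h3; case: (ltnP k x) => h4 /=; lia. Qed.

Lemma sps_SPS n r : sps n r -> r \in SPS n.
Proof.
elim: n r => [|m IH] r hr; first by rewrite /= inE; move/sps_size: hr => /size0nil ->.
have sr := sps_size hr.
case/lastP: r hr sr => [|r0 [k b]] hr sr //.
have ur : uniq (map fst (rcons r0 (k, b))) by rewrite (perm_uniq hr) iota_uniq.
move: (ur); rewrite map_rcons rcons_uniq => /andP[kn ur0].
have km : (k < m.+1)%N.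
  have : k \in iota 0 m.+1 by rewrite -(perm_mem hr) map_rcons mem_rcons inE eqxx.
  by rewrite mem_iota.
set r' := [seq (unbump k e.1, e.2) | e <- r0].
have -> : rcons r0 (k, b) = ext (k, b) r'.
  rewrite /ext /r' -map_comp; congr rcons; rewrite -[LHS]map_id; apply/eq_in_map => e er /=.
  rewrite unbumpKcond; case: (eqVneq e.1 k) => [ek|_]; last by case: e {er}.
  by move: kn; rewrite /= -ek map_f.
apply: allpairs_f; first by apply: allpairs_f; rewrite ?mem_iota //= ?inE; case: (b).
apply: IH.
apply: perm_iota_of.
- rewrite /r' -map_comp (map_comp (unbump k) fst) map_inj_in_uniq // => i j hi hj.
  have hi' : i \in predC1 k by rewrite inE; apply: contraNneq kn => <-.
  have hj' : j \in predC1 k by rewrite inE; apply: contraNneq kn => <-.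
  by move/(congr1 (bump k)); rewrite !unbumpK.
- rewrite /r' -map_comp; apply/allP => j /mapP [e er ->] /=.
  have : e.1 \in iota 0 m.+1 by rewrite -(perm_mem hr) map_rcons mem_rcons inE map_f ?orbT.
  have : e.1 != k by apply/negP => /eqP ek; move: kn; rewrite /= -ek map_f.
  by rewrite mem_iota => h1 /andP[_ h2]; apply: unbump_lt.
- by rewrite size_map /r' size_map; move: sr; rewrite size_rcons => -[].
Qed.

Lemma SPS_uniq n : uniq (SPS n).
Proof.
elim: n => [//|m IH]; apply: allpairs_uniq => //.
  apply: allpairs_uniq => //; first exact: iota_uniq.
  by move=> [k b] [k' b'] _ _ /= [-> ->].
move=> [p r] [p' r'] _ _ /= /rcons_inj [e1 ep]; rewrite ep in e1 *; congr pair.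
have fi : injective (fun e : nat * bool => (bump p'.1 e.1, e.2)).
  by move=> [i c] [j d] [/(can_inj (bumpK _)) -> ->].
exact: (inj_map fi e1).
Qed.

Lemma rho_inj n (s1 s2 : {perm 'I_n * bool}) : signedb s1 -> signedb s2 ->
  rho s1 = rho s2 -> s1 = s2.
Proof.
move=> h1 h2 /eq_in_map e; apply: invg_inj; apply/permP => -[i b].
have e0 : (s1^-1)%g (i, false) = (s2^-1)%g (i, false).
  have := e i (mem_enum _ i); rewrite /natpair.
  by case: ((s1^-1)%g _) => [a c]; case: ((s2^-1)%g _) => [a' c'] /= [/val_inj -> ->].
case: b => //; rewrite -[(i, true)]/(sflip (i, false)).
by rewrite !signedP ?signed_inv // e0.
Qed.

Lemma rho_surj n r : sps n r -> exists s : {perm 'I_n * bool}, signedb s /\ rho s = r.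
Proof.
case: n r => [|m] r hr.
  exists 1%g; split; first by apply/forallP => -[[]].
  by rewrite (size0nil (sps_size hr)) /rho; case: (enum 'I_0) (size_enum_ord 0) => [|? ?] //.
have ur : uniq (map fst r) by rewrite (perm_uniq hr) iota_uniq.
have sr := sps_size hr.
have bd : forall j, j < m.+1 -> (nth (0%N, false) r j).1 < m.+1.
  move=> j jm; have : (nth (0%N,false) r j).1 \in iota 0 m.+1.
    by rewrite -(perm_mem hr) -(nth_map _ 0%N) ?sr // mem_nth // size_map sr.
  by rewrite mem_iota.
pose f (z : 'I_m.+1 * bool) : 'I_m.+1 * bool :=
  (inord (nth (0%N, false) r z.1).1, (nth (0%N, false) r z.1).2 (+) z.2).
have finj : injective f.
  move=> [i b] [j c] [] /(congr1 (@nat_of_ord _)); rewrite !inordK ?bd // => eij ebc.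
  have eq : i = j.
    apply: val_inj => /=; apply/eqP; rewrite -(nth_uniq 0%N _ _ ur) ?size_map ?sr //.
    by rewrite !(nth_map (0%N, false)) ?sr // eij.
  by move: ebc; rewrite eq => /addbI ->.
pose g := perm finj.
have gs : signedb g.
  by apply/forallP => -[i b]; rewrite !permE /f /sflip /= addbN.
exists (g^-1)%g; split; first exact: signed_inv.
apply: (@eq_from_nth _ (0%N, false)); first by rewrite size_map size_enum_ord sr.
rewrite size_map size_enum_ord => j jm.
rewrite /rho (nth_map ord0) ?size_enum_ord // invgK permE /f /natpair /=.
have -> : nth ord0 (enum 'I_m.+1) j = Ordinal jm by apply: val_inj; rewrite /= nth_enum_ord.
rewrite /= inordK ?bd // addbF; by case: (nth _ r j).
Qed.

Lemma Sigma_SPS n : perm_eq [seq rho s | s <- Sigma n] (SPS n).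
Proof.
apply: uniq_perm.
- rewrite map_inj_in_uniq ?filter_uniq -?enumT ?enum_uniq // => s1 s2.
  by rewrite !mem_filter => /andP[h1 _] /andP[h2 _]; exact: rho_inj.
- exact: SPS_uniq.
- move=> r; apply/mapP/idP => [[s hs ->]|hr].
    by apply: sps_SPS; apply: sps_rho; move: hs; rewrite mem_filter => /andP[].
  have [s [hs <-]] := rho_surj (SPS_sps hr); exists s => //.
  by rewrite mem_filter hs mem_enum.
Qed.

Lemma sum_Sigma (V : nmodType) n (F : seq (nat * bool) -> V) :
  (\sum_(s <- Sigma n) F (rho s) = \sum_(r <- SPS n) F r)%R.
Proof. by rewrite -(big_map (@rho n) xpredT) (perm_big _ (Sigma_SPS n)). Qed.

Lemma pairB_nat a s c t : pairB (a, s) (c, t) =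
  ((if s then (if t then a < c else false) else (if t then true else c < a)) +
   (if s then (if t then true else c < a) else (if t then a < c else false)))%N.
Proof.
rewrite /pairB /sv /=; case: s; case: t => /=;
  by congr (_ + _)%N; congr nat_of_bool; apply/idP/idP; lia.
Qed.

Lemma ltn_bump2 k a c : (bump k a < bump k c) = (a < c).
Proof. by rewrite !ltnNge leq_bump2. Qed.

Lemma Bst_bump k r : Bst [seq (bump k e.1, e.2) | e <- r] = Bst r.
Proof.
elim: r => //= -[a s] r ->; congr (_ + _)%N; rewrite big_map; apply: eq_bigr => -[c t] _ /=.
by rewrite !pairB_nat !ltn_bump2.
Qed.

Lemma negs_ext k b r : negs (ext (k, b) r) = (negs r + b)%N.
Proof. by rewrite /negs /ext -cats1 count_cat count_map /= addn0. Qed.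

Lemma Bst_rcons s e : Bst (rcons s e) = (Bst s + \sum_(p <- s) pairB p e)%N.
Proof.
rewrite -cats1 Bst_cat /= big_nil !addn0; congr (_ + _)%N.
by apply: eq_bigr => p _; rewrite big_cons big_nil addn0.
Qed.

Lemma iota_index m : iota 0 m = index_iota 0 m.
Proof. by rewrite /index_iota subn0. Qed.

Lemma sum_leq_iota k m : (\sum_(j <- iota 0 m) (k <= j) = m - k)%N.
Proof.
rewrite iota_index; elim: m => [|m IH]; first by rewrite big_nil.
rewrite big_nat_recr //= IH; case: (leqP k m) => h /=; lia.
Qed.

Lemma sum_ltn_iota k m : (\sum_(j <- iota 0 m) (j < k) = minn m k)%N.
Proof.
rewrite iota_index; elim: m => [|m IH]; first by rewrite big_nil min0n.
rewrite big_nat_recr //= IH; case: (leqP k m) => h /=; lia.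
Qed.

Lemma bump_lt_self k j : (k < bump k j) = (k <= j).
Proof. by rewrite /bump; case: (leqP k j) => h /=; lia. Qed.

Lemma bump_gt_self k j : (bump k j < k) = (j < k).
Proof. by rewrite /bump; case: (leqP k j) => h /=; lia. Qed.

Lemma Bst_ext m k b r : sps m r -> k <= m ->
  Bst (ext (k, b) r) = (Bst r + (if b then m + k else m - k))%N.
Proof.
move=> hr km; rewrite /ext Bst_rcons Bst_bump big_map; congr (_ + _)%N.
transitivity (\sum_(e <- r) (if b then (1 + (e.1 < k))%N else nat_of_bool (k <= e.1))).
  apply: eq_bigr => -[j s] _ /=; rewrite pairB_nat bump_lt_self bump_gt_self.
  by case: b; case: s => //=; rewrite ?addn0 ?addn1.
rewrite -(big_map fst xpredT (fun j => if b then (1 + (j < k))%N else nat_of_bool (k <= j))).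
rewrite (perm_big _ hr); case: b; last exact: sum_leq_iota.
by rewrite big_split /= sum1_size size_iota sum_ltn_iota (minn_idPr km).
Qed.

Section Main.
Local Open Scope ring_scope.
Local Open Scope complex_scope.
Variables (R : rcfType) (H : lmodType R[i]) (ip : H -> H -> R[i]) (bar : H -> H).
Hypothesis bar_invol : forall y, bar (bar y) = y.
Hypothesis bar_sadj : forall y z, ip (bar y) z = ip y (bar z).
Variables (alpha q : R) (x : H).

Definition W (r : seq (nat * bool)) : R[i] := ((alpha ^+ negs r) * (q ^+ Bst r))%:C.

Lemma bf_single v : b_formula ip bar alpha q x [:: (1, v)] =
  [seq ((q ^+ (size v - 1 - j))%:C * ip x (nth 0 v j), del_at j v) | j <- iota 0 (size v)] ++
  [seq (alpha%:C * ((q ^+ (size v).-1)%:C * (q ^+ j)%:C * ip (bar x) (nth 0 v j)), del_at j v)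
     | j <- iota 0 (size v)].
Proof.
rewrite /b_formula /r_q /l_q /qNm1 /= !cats0 -map_comp; congr (_ ++ _).
  by apply: eq_map => j; rewrite mul1r.
by apply: eq_map => j /=; rewrite mulr1.
Qed.

Lemma sum_P_word (F : R[i] -> seq H -> R[i]) v :
  \sum_(c <- P_word bar alpha q v) F c.1 c.2 = \sum_(r <- SPS (size v)) F (W r) (sact bar r v).
Proof.
rewrite /P_word big_map -(sum_Sigma (size v) (fun r => F (W r) (sact bar r v))).
apply: eq_big_seq => s; rewrite mem_filter => /andP[hs _].
have [e1 e2 _] := l12 hs.
by rewrite /= e1 e2 (sigma_act_rho bar_invol) //.
Qed.

Lemma nth_del_at j k (v : seq H) : (k < size v)%N -> nth 0 (del_at k v) j = nth 0 v (bump k j).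
Proof.
move=> kv; rewrite /del_at nth_cat size_take kv /bump.
case: (ltnP j k) => h /=.
  by rewrite nth_take // add0n.
by rewrite nth_drop add1n; congr nth; lia.
Qed.

Lemma size_del_at k (v : seq H) : (k < size v)%N -> size (del_at k v) = (size v).-1.
Proof. by move=> kv; rewrite /del_at size_cat size_take kv size_drop; lia. Qed.

Lemma act_ext k b r' (v : seq H) : (k < size v)%N ->
  sact bar (ext (k, b) r') v = rcons (sact bar r' (del_at k v)) (sgn bar (k, b) v).
Proof.
move=> kv; rewrite /sact /ext map_rcons -map_comp; congr rcons.
by apply: eq_map => e /=; rewrite /sgn /= nth_del_at.
Qed.

Lemma W_ext m k b r' : sps m r' -> (k <= m)%N ->
  W (ext (k, b) r') = W r' * (if b then (alpha * q ^+ (m + k))%:C else (q ^+ (m - k))%:C).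
Proof.
move=> hr km; rewrite /W negs_ext (Bst_ext _ hr km); case: b; rewrite -rmorphM; congr (_%:C);
  by rewrite !exprD ?expr1 ?expr0 /=; ring.
Qed.

Lemma ip_word_rcons u t y z : ip_word ip (rcons u y) (rcons t z) = ip_word ip u t * ip y z.
Proof.
rewrite /ip_word !size_rcons eqSS; case: eqP => e; last by rewrite mul0r.
by rewrite zip_rcons // big_rcons.
Qed.

Lemma SPS_S m : SPS m.+1 = [seq ext p r | p <- allpts m.+1, r <- SPS m].
Proof. by []. Qed.

Lemma simple_main u v :
  \sum_(c <- P_word bar alpha q v) c.1 * ip_word ip (rcons u x) c.2 =
  \sum_(d <- b_formula ip bar alpha q x [:: (1, v)])
     d.1 * \sum_(c <- P_word bar alpha q d.2) c.1 * ip_word ip u c.2.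
Proof.
rewrite (sum_P_word (fun a w => a * ip_word ip (rcons u x) w)) bf_single big_cat /= !big_map.
case E: (size v) => [|m].
  by rewrite /= big_cons big_nil /ip_word size_rcons /= mulr0 !big_nil addr0.
rewrite SPS_S big_allpairs_dep /allpts big_allpairs_dep -big_split.
apply: eq_big_seq => k; rewrite mem_iota => /andP[_ km].
have kv : (k < size v)%N by rewrite E.
have sd : size (del_at k v) = m by rewrite size_del_at // E.
rewrite (sum_P_word (fun a w => a * ip_word ip u w)) sd.
have hb : forall b, \sum_(r <- SPS m) W (ext (k, b) r) * ip_word ip (rcons u x) (sact bar (ext (k, b) r) v) =
   ((if b then (alpha * q ^+ (m + k))%:C else (q ^+ (m - k))%:C) * ip x (sgn bar (k, b) v)) *
   \sum_(r <- SPS m) W r * ip_word ip u (sact bar r (del_at k v)).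
  move=> b; rewrite big_distrr; apply: eq_big_seq => r hr /=.
  have km' : (k <= m)%N by [].
  rewrite (W_ext b (SPS_sps hr) km') act_ext // ip_word_rcons.
  by move: (if b then _ else _) (W r) (ip_word _ _ _) (ip x _) => c1 c2 c3 c4; ring.
rewrite !big_cons big_nil /= addr0 !hb /sgn /= -bar_sadj.
have -> : (m.+1 - 1 - k = m - k)%N by lia.
rewrite exprD !rmorphM /=; ring.
Qed.

Lemma bf_lin (K : seq H -> R[i]) f :
  \sum_(d <- b_formula ip bar alpha q x f) d.1 * K d.2 =
  \sum_(a <- f) a.1 * \sum_(d <- b_formula ip bar alpha q x [:: (1, a.2)]) d.1 * K d.2.
Proof.
rewrite /b_formula big_cat /r_q big_flatten /= !big_map /l_q big_flatten /qNm1 !big_map -big_split.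
apply: eq_bigr => a _; rewrite -/(b_formula ip bar alpha q x [:: (1, a.2)]) bf_single big_cat !big_map.
rewrite mulrDr !big_distrr /=; congr (_ + _); apply: eq_bigr => j _ /=; ring.
Qed.

Lemma sum_P_aq (F : R[i] * seq H -> R[i]) f :
  \sum_(b <- P_aq bar alpha q f) F b =
  \sum_(a <- f) \sum_(c <- P_word bar alpha q a.2) F (a.1 * c.1, c.2).
Proof. by rewrite /P_aq big_flatten big_map; apply: eq_bigr => a _; rewrite big_map. Qed.

Lemma main_adj : is_aq_adjoint ip bar alpha q (rstar x) (b_formula ip bar alpha q x).
Proof.
move=> f g; rewrite /ip_aq /ip00 /rstar big_map; apply: eq_bigr => a _ /=.
rewrite (sum_P_aq (fun b => conjc a.1 * b.1 * ip_word ip (rcons a.2 x) b.2)).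
rewrite (sum_P_aq (fun b => conjc a.1 * b.1 * ip_word ip a.2 b.2)).
transitivity (\sum_(a' <- f) conjc a.1 * a'.1 *
   \sum_(c <- P_word bar alpha q a'.2) c.1 * ip_word ip (rcons a.2 x) c.2).
  by apply: eq_bigr => a' _; rewrite big_distrr; apply: eq_bigr => c _ /=; ring.
transitivity (\sum_(d <- b_formula ip bar alpha q x f) d.1 *
   (conjc a.1 * \sum_(c <- P_word bar alpha q d.2) c.1 * ip_word ip a.2 c.2)); last first.
  by apply: eq_bigr => d _; rewrite !big_distrr; apply: eq_bigr => c _ /=; ring.
rewrite (bf_lin (fun w => conjc a.1 * \sum_(c <- P_word bar alpha q w) c.1 * ip_word ip a.2 c.2)).
apply: eq_bigr => a' _; rewrite simple_main !big_distrr.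
by apply: eq_bigr => d _ /=; ring.
Qed.

End Main.

Local Open Scope ring_scope.

Theorem mainTheorem3 (R : rcfType) (H : lmodType R[i]) (ip : H -> H -> R[i])
  (ip_linr : forall x (a : R[i]) y z, ip x (a *: y + z) = a * ip x y + ip x z)
  (ip_herm : forall x y, ip y x = conjc (ip x y))
  (ip_pos : forall x, x != 0 -> 0 < ip x x)
  (bar : H -> H)
  (bar_lin : forall (a : R[i]) y z, bar (a *: y + z) = a *: bar y + bar z)
  (bar_invol : forall y, bar (bar y) = y)
  (bar_sadj : forall y z, ip (bar y) z = ip y (bar z))
  (alpha q : R) (halpha : -1 < alpha < 1) (hq : -1 < q < 1) (x : H) :
  is_aq_adjoint ip bar alpha q (rstar x) (b_formula ip bar alpha q x).
Proof.
exact: (main_adj bar_invol bar_sadj alpha q x).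
Qed.
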